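(* For all $m,n\in\mathbb{N}$ with $mn>1$ and every $\boldsymbol{\gamma}\in[0,1)^m$, we have $\Omega^{\boldsymbol{\gamma}}(m,n)\neq\emptyset$.
   Context: $[0,1)^{m\times n}$ is the set of real $m\times n$ matrices with entries in $[0,1)$. For $\boldsymbol{x}\in\mathbb{R}^n$, $\|\boldsymbol{x}\|=\max_i|x_i|$; for $\boldsymbol{y}\in\mathbb{R}^m$, $\langle\boldsymbol{y}\rangle=\min_{\boldsymbol{p}\in\mathbb{Z}^m}\|\boldsymbol{y}-\boldsymbol{p}\|$. For $\psi:\mathbb{N}\to[0,\infty)$, $W_{m,n}(\psi)$ is the set of pairs $(A,\boldsymbol{\gamma})\in[0,1)^{m\times n}\times[0,1)^m$ such that $\langle A\boldsymbol{q}-\boldsymbol{\gamma}\rangle<\psi(\|\boldsymbol{q}\|)$ for infinitely many $\boldsymbol{q}\in\mathbb{Z}^n$. ''Decreasing'' means non-increasing. $\mathcal{D}$ is the set of decreasing $\psi:\mathbb{N}\to[0,\infty)$ with $\sum_{q\ge1}q^{n-1}\psi(q)^m=\infty$. $\Omega(m,n)=\bigcap_{\psi\in\mathcal{D}}W_{m,n}(\psi)$ and $\Omega^{\boldsymbol{\gamma}}(m,n)=\{A\in[0,1)^{m\times n}:(A,\boldsymbol{\gamma})\in\Omega(m,n)\}$. *)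

(* Defs.v *)
From HB Require Import structures.
From mathcomp Require Import all_boot all_order all_algebra.
From mathcomp Require Import all_classical all_reals all_analysis.
From mathcomp Require Import Rstruct Rstruct_topology.
Set Implicit Arguments. Unset Strict Implicit. Unset Printing Implicit Defensive.
Import Order.TTheory GRing.Theory Num.Theory.
Local Open Scope ring_scope.
Local Open Scope classical_set_scope.

Definition R := Rdefinitions.R.

Definition supnorm (n : nat) (q : 'cV[int]_n) : nat :=
  \max_(i < n) absz (q i ord0).

Definition dist_Z (x : R) : R := Num.min (x - (Num.floor x)%:~R) ((Num.ceil x)%:~R - x).

(* <y> = min_{p in Z^m} ||y - p|| (sup norm) = max_j dist(y_j, Z) *)
Definition dist_Zm (m : nat) (y : 'cV[R]_m) : R := \big[Num.max/0]_(j < m) dist_Z (y j ord0).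

Definition unit_entries (m n : nat) (A : 'M[R]_(m, n)) : Prop :=
  forall i j, 0 <= A i j < 1.

Definition W (m n : nat) (psi : nat -> R) (A : 'M[R]_(m, n)) (g : 'cV[R]_m) : Prop :=
  unit_entries A /\ unit_entries g /\
  infinite_set [set q : 'cV[int]_n |
     dist_Zm (A *m map_mx (fun z : int => z%:~R) q - g) < psi (supnorm q)].

(* decreasing (= non-increasing) psi : N -> [0,oo) with
   sum_{q >= 1} q^(n-1) psi(q)^m = infinity *)
Definition in_D (m n : nat) (psi : nat -> R) : Prop :=
  (forall k, 0 <= psi k) /\
  (forall k l, (1 <= k <= l)%N -> psi l <= psi k) /\
  (series (fun k : nat => (k.+1)%:R ^+ (n.-1) * psi k.+1 ^+ m) @ \oo --> +oo).

Definition Omega_gamma (m n : nat) (g : 'cV[R]_m) : set 'M[R]_(m, n) :=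
  [set A | unit_entries A /\ forall psi, @in_D m n psi -> @W m n psi A g].

(* Main.v *)
Require Import Defs.
From HB Require Import structures.
From mathcomp Require Import all_boot all_order all_algebra.
From mathcomp Require Import all_classical all_reals all_analysis.
From mathcomp Require Import Rstruct Rstruct_topology.
From mathcomp Require Import zify ring lra.
Import Order.TTheory GRing.Theory Num.Theory.
Local Open Scope ring_scope.
Local Open Scope classical_set_scope.

Lemma D_unbounded m n psi : in_D m n psi -> forall B : R, exists N,
  B < \sum_(0 <= k < N) ((k.+1)%:R ^+ n.-1 * psi k.+1 ^+ m).
Proof.
move=> [_ [_ H]] B.
move/cvgryPgt: H => /(_ B).
case=> N _ HN; exists N; exact: (HN N (leqnn N)).
Qed.

Lemma sum_mono (u : nat -> R) N M : (forall k, 0 <= u k) -> (N <= M)%N ->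
  \sum_(0 <= k < N) u k <= \sum_(0 <= k < M) u k.
Proof.
move=> u0 NM; rewrite (big_cat_nat (leq0n N) NM) /= lerDl.
by apply: sumr_ge0 => i _.
Qed.

Lemma infinite_unbounded (T : choiceType) (S : set T) (h : T -> nat) :
  (forall M, exists x, S x /\ (M < h x)%N) -> infinite_set S.
Proof.
move=> HS /finite_fsetP [X SX].
have [x [Sx Hx]] := HS (\max_(y <- finmap.enum_fset X) h y).
move: Sx; rewrite SX /= => xX.
have := @leq_bigmax_seq _ (finmap.enum_fset X) xpredT h x xX erefl.
by rewrite leqNgt Hx.
Qed.
Lemma sum_ev0 (u : nat -> R) K : (forall k, 0 <= u k) ->
  (forall k, (K <= k)%N -> u k = 0) ->
  forall N, \sum_(0 <= k < N) u k <= \sum_(0 <= k < K) u k.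
Proof.
move=> u0 uK N.
apply: (le_trans (@sum_mono u N (K + N) u0 (leq_addl _ _))).
rewrite (big_cat_nat (leq0n K) (leq_addr N K)) /=.
rewrite [X in _ + X]big1_seq ?addr0 //.
move=> k /andP[_]; rewrite mem_index_iota => /andP[Kk _]; exact: uK.
Qed.

Lemma block_bound (u : nat -> R) (p : nat -> nat) (c : R) I :
 (forall k, 0 <= u k) -> 0 <= c -> (forall i, 0 < p i)%N -> (forall i, p i < p i.+1)%N ->
 (forall i k, (I <= i)%N -> (p i <= k < p i.+1)%N ->
    u k <= c / ((p i)%:R * (p i.+1)%:R)) ->
 forall N, \sum_(0 <= k < N) u k <= \sum_(0 <= k < p I) u k + c / (p I)%:R.
Proof.
move=> u0 c0 p0 pinc ub.
have pge : forall i, (i <= p i)%N.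
  elim=> [|i IH] //; exact: leq_ltn_trans IH (pinc i).
have claim : forall j, \sum_(0 <= k < p (I + j)%N) u k <=
   \sum_(0 <= k < p I) u k + c / (p I)%:R - c / (p (I + j)%N)%:R.
  elim=> [|j IH]; first by rewrite addn0 addrK.
  set i := (I + j)%N.
  rewrite addnS -/i (big_cat_nat (leq0n (p i)) (ltnW (pinc i))) /=.
  have H : \sum_(p i <= k < p i.+1) u k <= c / ((p i)%:R * (p i.+1)%:R) *+ (p i.+1 - p i).
    rewrite -sumr_const_nat; apply: ler_sum_nat => k Hk; apply: ub => //.
    exact: leq_addr.
  have E : c / ((p i)%:R * (p i.+1)%:R) *+ (p i.+1 - p i) = c / (p i)%:R - c / (p i.+1)%:R.
    rewrite -mulr_natr natrB; last exact: ltnW.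
    have h1 : (p i)%:R != 0 :> R by rewrite pnatr_eq0 -lt0n.
    have h2 : (p i.+1)%:R != 0 :> R by rewrite pnatr_eq0 -lt0n.
    by field; apply/andP.
  rewrite E in H.
  have cle : c / (p i.+1)%:R <= c / (p i)%:R.
    apply: ler_wpM2l => //; rewrite lef_pV2 ?posrE ?ltr0n // ler_nat; exact: ltnW.
  lra.
move=> N.
apply: (le_trans (@sum_mono u N (p (I + N)%N) u0 _)).
  exact: leq_trans (leq_addl I N) (pge _).
apply: (le_trans (claim N)).
have : 0 <= c / (p (I + N)%N)%:R by apply: divr_ge0.
lra.
Qed.
Fixpoint qs (i : nat) : nat := if i is i'.+1 then (qs i' ^ 3)%N else 2%N.
Definition fracR (y : R) : R := y - (Num.floor y)%:~R.
Fixpoint xs (g : R) (i : nat) : R :=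
  if i is i'.+1 then xs g i' + fracR (g - (qs i'.+1)%:R * xs g i') / (qs i'.+1)%:R
  else g / 2.

Lemma qs_ge2 i : (2 <= qs i)%N.
Proof.
elim: i => [|i IH] //=.
apply: (leq_trans IH); rewrite -{1}(expn1 (qs i)) leq_pexp2l //; lia.
Qed.

Lemma qs_2 i : (2 * qs i <= qs i.+1)%N.
Proof.
have h := qs_ge2 i; rewrite /= expnS expnS expn1 mulnA (mulnC 2%N) -mulnA.
rewrite leq_pmul2l; last lia. nia.
Qed.

Lemma qs_inc i : (qs i < qs i.+1)%N.
Proof. have := qs_2 i; have := qs_ge2 i; lia. Qed.

Lemma qs_gt i : (i < qs i)%N.
Proof. elim: i => [|i IH] //; exact: leq_ltn_trans IH (qs_inc i). Qed.

Lemma fracR_ge0 y : 0 <= fracR y.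
Proof. by rewrite /fracR subr_ge0 floor_le. Qed.

Lemma fracR_lt1 y : fracR y < 1.
Proof. by rewrite /fracR ltrBlDr addrC -[1]/(1%:~R) -intrD floorD1_gt. Qed.

Lemma qpos i : 0 < (qs i)%:R :> R.
Proof. by rewrite ltr0n; have := qs_ge2 i; lia. Qed.

Lemma xs_int g i : exists z : int, (qs i)%:R * xs g i - g = z%:~R.
Proof.
case: i => [|i] /=.
  by exists 0; rewrite /= mulr2n; field.
set q := (qs i ^ 3)%N.
exists (- Num.floor (g - q%:R * xs g i)).
have hq : q%:R != 0 :> R by rewrite pnatr_eq0 /q; have := qs_ge2 i; rewrite expn_eq0; lia.
rewrite /fracR mulrDr mulrCA mulfV // mulr1 intrN; ring.
Qed.

Lemma xs_step g i : xs g i <= xs g i.+1 <= xs g i + 1 / (qs i.+1)%:R.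
Proof.
rewrite /= lerDl lerD2l; apply/andP; split.
  by apply: divr_ge0; [exact: fracR_ge0 | exact: ltW (qpos i.+1)].
have hq := qpos i.+1.
by rewrite ler_pM2r ?invr_gt0 //; exact: ltW (fracR_lt1 _).
Qed.

Lemma xs_mono g i j : (i <= j)%N -> xs g i <= xs g j.
Proof.
move/subnK <-; elim: (j - i)%N => [|d IH] //=.
rewrite ?addSn; apply: le_trans IH _; by case/andP: (xs_step g (d + i)).
Qed.

Lemma xs_ub g i d : xs g (d + i) <= xs g i + 2 / (qs i.+1)%:R - 2 / (qs (d + i).+1)%:R.
Proof.
elim: d => [|d IH]; first by rewrite add0n addrK.
rewrite ?addSn; case/andP: (xs_step g (d + i)) => _ h.
have h2 : 2 / (qs (d + i).+2)%:R <= 1 / (qs (d + i).+1)%:R :> R.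
  have q1 := qpos (d + i).+1; have q2 := qpos (d + i).+2.
  rewrite ler_pdivrMr // mulrAC ler_pdivlMr // mul1r.
  by rewrite -natrM ler_nat; have := qs_2 (d + i).+1; lia.
have e : 2 / (qs (d + i).+1)%:R = 1 / (qs (d + i).+1)%:R + 1 / (qs (d + i).+1)%:R :> R.
  by rewrite -mulrDl.
lra.
Qed.

Lemma xs_bound g i j : xs g j <= xs g i + 2 / (qs i.+1)%:R.
Proof.
have hp : 0 <= 2 / (qs i.+1)%:R :> R by apply: divr_ge0 => //; exact: ltW (qpos _).
case: (leqP i j) => h.
  rewrite -(subnK h); have := xs_ub g i (j - i); have : 0 <= 2 / (qs (j - i + i).+1)%:R :> R.
    by apply: divr_ge0 => //; exact: ltW (qpos _).
  lra.
have := @xs_mono g j i (ltnW h); lra.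
Qed.

Definition xa (g : R) : R := sup (range (xs g)).

Lemma xa_bounds g i : xs g i <= xa g <= xs g i + 2 / (qs i.+1)%:R.
Proof.
have ne : range (xs g) !=set0 by exists (xs g 0), 0%N.
apply/andP; split.
  apply: sup_upper_bound; last by exists i.
  split => //; exists (xs g 0 + 2 / (qs 1)%:R) => _ [j _ <-]; exact: xs_bound.
by apply: ge_sup => // _ [j _ <-]; exact: xs_bound.
Qed.

Lemma xa_unit g : 0 <= g < 1 -> 0 <= xa g < 1.
Proof.
move=> /andP[g0 g1]; have /andP[h1 h2] := xa_bounds g 0.
move: h1 h2 => /=; rewrite (_ : (2 ^ 3)%N%:R = 8 :> R) //.
move=> h1 h2; apply/andP; split; lra.
Qed.

Lemma xa_approx g i : exists z : int,
  0 <= (qs i)%:R * xa g - g - z%:~R <= 2 / ((qs i)%:R ^+ 2).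
Proof.
have [z hz] := xs_int g i; exists z.
have /andP[h1 h2] := xa_bounds g i.
have e : (qs i)%:R * xa g - g - z%:~R = (qs i)%:R * (xa g - xs g i) by rewrite -hz; ring.
rewrite e; have q := qpos i.
apply/andP; split; first by apply: mulr_ge0; lra.
have e2 : 2 / (qs i)%:R ^+ 2 = (qs i)%:R * (2 / (qs i.+1)%:R) :> R.
  change (qs i.+1) with (qs i ^ 3)%N; rewrite natrX; field; rewrite lt0r_neq0 //.
rewrite e2 ler_pM2l //; lra.
Qed.

Lemma dist_Z_le (z : int) (t : R) : 0 <= t -> dist_Z (z%:~R + t) <= t.
Proof.
move=> t0; rewrite /dist_Z ge_min; apply/orP; left.
have : z <= Num.floor (z%:~R + t) by rewrite floor_ge_int lerDl.
rewrite -(ler_int R) => h; lra.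
Qed.

Lemma dist_Zm_le m (y : 'cV[R]_m) e : 0 <= e -> (forall j, dist_Z (y j ord0) <= e) ->
  dist_Zm y <= e.
Proof. by move=> e0 h; rewrite /dist_Zm; apply: bigmax_le. Qed.

Lemma psi_pos m n psi : (0 < m)%N -> in_D m n psi -> forall k, (1 <= k)%N -> 0 < psi k.
Proof.
move=> m0 D k k1; have [p0 [pdec _]] := D.
rewrite lt_neqAle p0 andbT; apply/negP => /eqP pk.
pose u := fun k : nat => (k.+1)%:R ^+ n.-1 * psi k.+1 ^+ m.
have u0 : forall j, 0 <= u j by move=> j; apply: mulr_ge0; apply: exprn_ge0.
have uz : forall j, (k <= j)%N -> u j = 0.
  move=> j kj; rewrite /u.
  have : psi j.+1 <= psi k by apply: pdec; rewrite k1 /=; lia.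
  rewrite -pk => h; have -> : psi j.+1 = 0 by apply/eqP; rewrite eq_le h p0.
  by rewrite expr0n eqn0Ngt m0 mulr0.
have [N HN] := @D_unbounded m n psi D (\sum_(0 <= j < k) u j).
have := @sum_ev0 u k u0 uz N; rewrite -/u in HN; lra.
Qed.

Lemma case_n1 m (g : 'cV[R]_m) :
  (1 < m)%N -> unit_entries g -> (@Omega_gamma m 1 g) !=set0.
Proof.
move=> m1 gu.
pose A : 'M[R]_(m, 1) := \matrix_(i, j) xa (g i ord0).
have Au : unit_entries A by move=> i j; rewrite mxE; apply: xa_unit; exact: gu.
exists A; split => // psi D; split => //; split => //.
apply: (@infinite_unbounded _ _ (@supnorm 1)) => M.
apply: contrapT => hno.
pose Q := fun i : nat => (const_mx (qs i)%:Z : 'cV[int]_1).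
have supQ : forall i, supnorm (Q i) = qs i.
  by move=> i; rewrite /supnorm big_ord1 /Q mxE.
have distQ : forall i, dist_Zm (A *m map_mx (fun z : int => z%:~R) (Q i) - g)
     <= 2 / ((qs i)%:R ^+ 2).
  move=> i; apply: dist_Zm_le.
    by apply: divr_ge0 => //; apply: exprn_ge0; exact: ltW (qpos i).
  move=> c; rewrite !mxE big_ord1 !mxE /=.
  have [z /andP[h1 h2]] := xa_approx (g c ord0) i.
  have -> : xa (g c ord0) * ((qs i)%:Z)%:~R - g c ord0 =
     z%:~R + ((qs i)%:R * xa (g c ord0) - g c ord0 - z%:~R).
    by rewrite pmulrn mulrC; ring.
  apply: le_trans h2; exact: dist_Z_le.
have key : forall i, (M <= i)%N -> psi (qs i) <= 2 / ((qs i)%:R ^+ 2).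
  move=> i Mi; rewrite leNgt; apply/negP => hlt; apply: hno; exists (Q i).
  split; last by rewrite supQ; exact: leq_ltn_trans Mi (qs_gt i).
  rewrite /= supQ; exact: le_lt_trans (distQ i) hlt.
have [p0 [pdec _]] := D.
pose u := fun k : nat => (k.+1)%:R ^+ (1%N.-1) * psi k.+1 ^+ m.
have u0 : forall j, 0 <= u j by move=> j; apply: mulr_ge0; apply: exprn_ge0.
have ub : forall i k, (M <= i)%N -> (qs i <= k < qs i.+1)%N ->
    u k <= 4 / ((qs i)%:R * (qs i.+1)%:R).
  move=> i k Mi /andP[k1 k2]; rewrite /u /= expr0 mul1r.
  have hq := qpos i; have hq2 := qs_ge2 i.
  have q2 : 2 <= (qs i)%:R :> R by rewrite ler_nat.
  have b1 : psi k.+1 <= psi (qs i) by apply: pdec; apply/andP; split; lia.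
  have b2 := key i Mi.
  have b3 : 2 / ((qs i)%:R ^+ 2) <= 1 :> R.
    rewrite ler_pdivrMr ?exprn_gt0 // mul1r expr2; nra.
  have p1 : psi k.+1 <= 1 by lra.
  apply: (le_trans (ler_wiXn2l (p0 _) p1 m1)).
  apply: (le_trans (lerXn2r 2 (p0 _) _ (le_trans b1 b2))).
    by rewrite nnegrE; apply: divr_ge0 => //; apply: exprn_ge0; lra.
  change (qs i.+1) with (qs i ^ 3)%N; rewrite natrX.
  rewrite expr_div_n -exprM le_eqVlt; apply/orP; left; apply/eqP.
  field; rewrite lt0r_neq0 //.
have := @block_bound u qs 4 M u0 ltac:(lra) (fun i => leq_trans (isT : (0 < 2)%N) (qs_ge2 i)) qs_inc ub.
move=> HB.
have [N HN] := @D_unbounded m 1 psi D (\sum_(0 <= k < qs M) u k + 4 / (qs M)%:R).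
have := HB N; rewrite /u in HN *; lra.
Qed.

Lemma case_n2 m n (g : 'cV[R]_m) :
  (0 < m)%N -> unit_entries g -> (@Omega_gamma m n.+2 g) !=set0.
Proof.
move=> m0 gu.
pose A : 'M[R]_(m, n.+2) := \matrix_(i, j) if j == ord0 then g i ord0 else 0.
have Au : unit_entries A.
  move=> i j; rewrite mxE; case: eqP => _; [exact: gu | by rewrite lexx ltr01].
exists A; split => // psi D; split => //; split => //.
apply: (@infinite_unbounded _ _ (@supnorm n.+2)) => M.
pose Q : 'cV[int]_n.+2 := \col_j (if j == ord0 then 1 else (M.+1)%:Z).
have sQ : (M < supnorm Q)%N.
  have h := @leq_bigmax _ (fun i : 'I_n.+2 => absz (Q i ord0)) (lift ord0 ord0).
  rewrite /supnorm; apply: leq_trans h; by rewrite /Q mxE.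
exists Q; split => //=.
have dQ : dist_Zm (A *m map_mx (fun z : int => z%:~R) Q - g) <= 0.
  apply: dist_Zm_le => // c.
  rewrite !mxE big_ord_recl /A /Q !mxE eqxx /= mulr1.
  rewrite big1 ?addr0 ?subrr.
    by have := @dist_Z_le 0 0 (lexx 0); rewrite addr0.
  by move=> j _; rewrite !mxE eq_sym (negbTE (neq_lift _ _)) mul0r.
apply: le_lt_trans dQ _; apply: (@psi_pos m n.+2 psi m0 D); lia.
Qed.

Theorem corollary1p1 (m n : nat) (g : 'cV[R]_m) :
  (1 < m * n)%N -> unit_entries g -> (@Omega_gamma m n g) !=set0.
Proof.
case: n => [|[|n]] mn gu.
- by rewrite muln0 in mn.
- by apply: case_n1 => //; rewrite muln1 in mn.
- apply: case_n2 => //; case: m mn {gu g} => //.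
Qed.
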